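(* Let $F$ be a maximally expressive I-GGNN+ of depth $T=1$ (with injective readout). Let $\mathcal G=(A,X)$ and $\hat{\mathcal G}=(\hat A,\hat X)$ be geometric graphs in $\mathbb{R}^d$ whose adjacency matrices are both the complete graph on $n$ nodes, with $X,\hat X\in\mathbb{R}^{n\times d}$ arbitrary. If $F(\mathcal G)=F(\hat{\mathcal G})$, then there exist a permutation $\pi$ of $\{1,\dots,n\}$, $Q\in O(d)$ and $t\in\mathbb{R}^d$ with $\hat x_{\pi(i)}=Qx_i+t$ for all $i$.
   Context: A geometric graph in $\mathbb{R}^d$ is a pair $(A,X)$, $A\in\{0,1\}^{n\times n}$ symmetric zero-diagonal adjacency matrix, $X\in\mathbb{R}^{n\times d}$ with rows $x_1,\dots,x_n$; $\mathcal N_i=\{j:A_{ij}=1\}$. The complete graph has $A_{ij}=1$ for all $i\neq j$. An I-GGNN+ of depth $T$: all nodes start with the same feature $v_i^{(0)}=v^{(0)}$; for $t=0,\dots,T-1$, $v_i^{(t+1)}=f_t(\{\!\{(v_j^{(t)},x_i-x_j):j\in\mathcal N_i\}\!\})$, where $f_t$ is defined on finite multisets and satisfies $f_t(\{\!\{(v_j,z_j)\}\!\})=f_t(\{\!\{(v_j,Qz_j)\}\!\})$ for all $Q\in O(d)$ (the same $Q$ applied to all relative vectors, not to the features); the output is $\mathrm{ReadOut}(\{\!\{v_1^{(T)},\dots,v_n^{(T)}\}\!\})$. It is maximally expressive if $f_t(\{\!\{(v_j,z_j)\}\!\})=f_t(\{\!\{(\hat v_j,\hat z_j)\}\!\})$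 holds iff there is $Q\in O(d)$ with $\{\!\{(v_j,z_j)\}\!\}=\{\!\{(\hat v_j,Q\hat z_j)\}\!\}$, and $\mathrm{ReadOut}$ is injective on finite multisets. *)

(* Defs.v *)
From HB Require Import structures.
From mathcomp Require Import all_boot all_order all_algebra all_fingroup.
From mathcomp Require Import reals.
Set Implicit Arguments. Unset Strict Implicit. Unset Printing Implicit Defensive.
Import Order.TTheory GRing.Theory Num.Theory.
Local Open Scope ring_scope.

Definition orthogonal_mx (R : realType) (d : nat) (Q : 'M[R]_d) : bool :=
  Q *m Q^T == 1%:M.

(* Points / relative vectors of R^d are row vectors; Q acts as z |-> Q z,
   i.e. on rows: z |-> (Q z^T)^T = z Q^T. *)
Definition Oact (R : realType) (d : nat) (Q : 'M[R]_d) (z : 'rV[R]_d) : 'rV[R]_d :=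
  z *m Q^T.

(* Finite multisets are represented by sequences up to perm_eq. *)

Definition is_layer_fun (R : realType) (d : nat) (V W : eqType)
  (f : seq (V * 'rV[R]_d) -> W) : Prop :=
  (forall s s', perm_eq s s' -> f s = f s') /\
  (forall (Q : 'M[R]_d) s, orthogonal_mx Q ->
     f s = f [seq (p.1, Oact Q p.2) | p <- s]).

Definition max_expressive_layer (R : realType) (d : nat) (V W : eqType)
  (f : seq (V * 'rV[R]_d) -> W) : Prop :=
  forall s s', f s = f s' <->
    exists2 Q : 'M[R]_d, orthogonal_mx Q &
      perm_eq s [seq (p.1, Oact Q p.2) | p <- s'].

Definition is_readout (W U : eqType) (r : seq W -> U) : Prop :=
  forall s s', perm_eq s s' -> r s = r s'.

Definition injective_readout (W U : eqType) (r : seq W -> U) : Prop :=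
  forall s s', r s = r s' <-> perm_eq s s'.

Definition complete_adj (n : nat) (A : 'M[bool]_n) : Prop :=
  forall i j : 'I_n, A i j = (i != j).

Definition adjacency (n : nat) (A : 'M[bool]_n) : Prop :=
  (forall i j, A i j = A j i) /\ (forall i, A i i = false).

Definition ggnn1 (R : realType) (d n : nat) (V W U : eqType)
  (v0 : V) (f0 : seq (V * 'rV[R]_d) -> W) (readout : seq W -> U)
  (A : 'M[bool]_n) (X : 'M[R]_(n, d)) : U :=
  readout [seq f0 [seq (v0, row i X - row j X) | j <- enum 'I_n & A i j]
          | i <- enum 'I_n].

(* Main.v *)
Require Import Defs.
From HB Require Import structures.
From mathcomp Require Import all_boot all_order all_algebra all_fingroup.
From mathcomp Require Import reals.
Import Order.TTheory GRing.Theory Num.Theory.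
Local Open Scope ring_scope.

Lemma map_enum_mk (T : Type) n (g : 'I_n -> T) :
  map g (enum 'I_n) = [tuple g j | j < n] :> seq T.
Proof. by rewrite -[RHS]map_tnth_enum; apply: eq_map => j; rewrite tnth_mktuple. Qed.

Lemma perm_to_fun (T : eqType) n (f g : 'I_n -> T) :
  perm_eq (map f (enum 'I_n)) (map g (enum 'I_n)) ->
  exists p : 'S_n, forall i, f i = g (p i).
Proof.
rewrite [map g _]map_enum_mk => /tuple_permP [p Hp]; exists p => i.
have E : [tuple f j | j < n] = [tuple tnth [tuple g j | j < n] (p j) | j < n].
  by apply: val_inj; rewrite /= -Hp map_enum_mk.
by have := congr1 (fun t => tnth t i) E; rewrite !tnth_mktuple.
Qed.

Lemma perm_full (T : eqType) n (f : 'I_n -> T) i :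
  perm_eq (map f (enum 'I_n)) (f i :: map f [seq j <- enum 'I_n | i != j]).
Proof.
have := perm_to_rem (mem_enum (pred_of_simpl predT) i).
rewrite rem_filter ?enum_uniq // => /(perm_map f) /= H.
apply: (perm_trans H); rewrite perm_cons; apply/perm_map.
by rewrite (eq_filter (a2 := fun j => i != j)) // => j; rewrite /= eq_sym.
Qed.

Theorem mainTheorem6 (R : realType) (d n : nat) (V W U : eqType)
  (v0 : V) (f0 : seq (V * 'rV[R]_d) -> W) (readout : seq W -> U)
  (Hf0 : is_layer_fun f0) (Hmax : max_expressive_layer f0)
  (Hr : is_readout readout) (Hrinj : injective_readout readout)
  (A Ahat : 'M[bool]_n) (X Xhat : 'M[R]_(n, d))
  (HA : complete_adj A) (HAhat : complete_adj Ahat) :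
  ggnn1 v0 f0 readout A X = ggnn1 v0 f0 readout Ahat Xhat ->
  exists (pi : 'S_n) (Q : 'M[R]_d) (t : 'rV[R]_d),
    orthogonal_mx Q /\
    forall i : 'I_n, row (pi i) Xhat = Oact Q (row i X) + t.
Proof.
case: n A Ahat X Xhat HA HAhat => [|m] A Ahat X Xhat HA HAhat H.
  exists 1%g, 1%:M, 0; split; first by rewrite /orthogonal_mx trmx1 mulmx1.
  by case.
move/Hrinj: H => Hp.
set i := (ord0 : 'I_m.+1).
have : f0 [seq (v0, row i X - row j X) | j <- enum 'I_m.+1 & A i j] \in
   [seq f0 [seq (v0, row i Xhat - row j Xhat) | j <- enum 'I_m.+1 & Ahat i j]
          | i <- enum 'I_m.+1].
  by rewrite -(perm_mem Hp); apply: map_f; rewrite mem_enum.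
case/mapP => k _ /Hmax [Q HQ Hs].
have E1 : [seq j <- enum 'I_m.+1 | A i j] = [seq j <- enum 'I_m.+1 | i != j].
  by apply: eq_filter => j; rewrite HA.
have E2 : [seq j <- enum 'I_m.+1 | Ahat k j] = [seq j <- enum 'I_m.+1 | k != j].
  by apply: eq_filter => j; rewrite HAhat.
rewrite E1 E2 in Hs.
have Hs2 : perm_eq [seq row i X - row j X | j <- enum 'I_m.+1 & i != j]
   [seq Oact Q (row k Xhat - row j Xhat) | j <- enum 'I_m.+1 & k != j].
  by move: (perm_map snd Hs); rewrite -!map_comp.
have Hfull : perm_eq [seq row i X - row j X | j <- enum 'I_m.+1]
   [seq Oact Q (row k Xhat - row j Xhat) | j <- enum 'I_m.+1].
  apply: (perm_trans (@perm_full _ _ (fun j => row i X - row j X) i)).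
  rewrite perm_sym; apply: (perm_trans (@perm_full _ _ (fun j => Oact Q (row k Xhat - row j Xhat)) k)); rewrite perm_sym.
  rewrite /= !subrr /Oact mul0mx perm_cons; exact: Hs2.
case/perm_to_fun: Hfull => p Hpf.
have HQ' : Q^T *m Q = 1%:M by apply: mulmx1C; apply/eqP.
exists p, Q^T, (row k Xhat - row i X *m Q); split.
  by rewrite /orthogonal_mx trmxK HQ'.
move=> j; rewrite /Oact trmxK.
have := congr1 (fun z => z *m Q) (Hpf j); rewrite /Oact /= -mulmxA HQ' mulmx1.
rewrite mulmxBl => E.
have Ek : row k Xhat = (row i X *m Q - row j X *m Q) + row (p j) Xhat by rewrite E subrK.
rewrite Ek; set a := row i X *m Q; set b := row j X *m Q; set c := row (p j) Xhat.
by rewrite (addrC (a - b)) -addrA addrC -!addrA (addrC (- b)) !addrA addrK (addrC b) addrK.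
Qed.
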